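(* Let $X$ be a vector lattice equipped with a lattice norm and let $\widehat X$ be its norm completion (a Banach lattice). The following are equivalent: (1) for every Banach lattice $Y$, every bounded linear injective lattice homomorphism $T:X\to Y$ extends to a bounded linear injective operator $\widehat T:\widehat X\to Y$; (2) for every $x\in\widehat X$ with $x>0$, one has $I_x\cap X\neq\{0\}$, where $I_x$ is the closed ideal of $\widehat X$ generated by $x$. *)

(* Defs.v *)
From HB Require Import structures.
From mathcomp Require Import all_boot all_order all_algebra.
From mathcomp Require Import all_classical all_reals all_analysis.
Set Implicit Arguments. Unset Strict Implicit. Unset Printing Implicit Defensive.
Import Order.TTheory GRing.Theory Num.Theory.
Import numFieldNormedType.Exports.
Local Open Scope classical_set_scope.
Local Open Scope ring_scope.

Record vlattice (R : realType) := VLattice {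
  vl_car :> normedModType R;
  vl_le : vl_car -> vl_car -> Prop;
  vl_join : vl_car -> vl_car -> vl_car;
  vl_le_refl : forall x, vl_le x x;
  vl_le_anti : forall x y, vl_le x y -> vl_le y x -> x = y;
  vl_le_trans : forall x y z, vl_le x y -> vl_le y z -> vl_le x z;
  vl_le_add : forall x y z, vl_le x y -> vl_le (x + z) (y + z);
  vl_le_scale : forall (a : R) x y, 0 <= a -> vl_le x y -> vl_le (a *: x) (a *: y);
  vl_join_ubl : forall x y, vl_le x (vl_join x y);
  vl_join_ubr : forall x y, vl_le y (vl_join x y);
  vl_join_least : forall x y z, vl_le x z -> vl_le y z -> vl_le (vl_join x y) z;
  vl_lattice_norm : forall x y,
    vl_le (vl_join x (- x)) (vl_join y (- y)) -> `|x| <= `|y|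
}.

Arguments vl_le {R} v _ _.
Arguments vl_join {R} v _ _.

Definition vl_abs (R : realType) (X : vlattice R) (x : X) : X := vl_join X x (- x).

Definition is_banach (R : realType) (X : vlattice R) : Prop :=
  forall u : nat -> X,
    (forall e : R, 0 < e -> exists N : nat, forall m n : nat,
        (N <= m)%N -> (N <= n)%N -> `|u m - u n| < e) ->
    exists l : X, forall e : R, 0 < e -> exists N : nat, forall n : nat,
        (N <= n)%N -> `|u n - l| < e.

Definition is_lin (R : realType) (X Y : vlattice R) (T : X -> Y) : Prop :=
  forall (a : R) (x y : X), T (a *: x + y) = a *: T x + T y.

Definition is_bounded (R : realType) (X Y : vlattice R) (T : X -> Y) : Prop :=
  exists C : R, forall x : X, `|T x| <= C * `|x|.

Definition is_lattice_hom (R : realType) (X Y : vlattice R) (T : X -> Y) : Prop :=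
  forall x y : X, T (vl_join X x y) = vl_join Y (T x) (T y).

Definition is_completion (R : realType) (X Xh : vlattice R) (j : X -> Xh) : Prop :=
  [/\ is_banach Xh, is_lin j, is_lattice_hom j,
      (forall x : X, `|j x| = `|x|) &
      (forall (y : Xh) (e : R), 0 < e -> exists x : X, `|y - j x| < e)].

Definition is_ideal (R : realType) (X : vlattice R) (I : set X) : Prop :=
  [/\ I 0,
      (forall (a : R) (x y : X), I x -> I y -> I (a *: x + y)) &
      (forall x y : X, I y -> vl_le X (vl_abs x) (vl_abs y) -> I x)].

Definition is_closed_ideal (R : realType) (X : vlattice R) (I : set X) : Prop :=
  is_ideal I /\ closed I.

Definition gen_closed_ideal (R : realType) (X : vlattice R) (x : X) : set X :=
  [set y | forall J : set X, is_closed_ideal J -> J x -> J y].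

(* Main.v *)
Require Import Defs.
From HB Require Import structures.
From mathcomp Require Import all_boot all_order all_algebra.
From mathcomp Require Import all_classical all_reals all_analysis.
From mathcomp Require Import ring lra.
Import Order.TTheory GRing.Theory Num.Theory.
Import numFieldNormedType.Exports.
Local Open Scope classical_set_scope.
Local Open Scope ring_scope.

Module Aux.
Set Implicit Arguments. Unset Strict Implicit. Unset Printing Implicit Defensive.


Section VL.
Variables (R : realType) (V : vlattice R).
Local Notation le := (vl_le V).
Local Notation join := (vl_join V).
Local Notation abs := (@vl_abs R V).

Lemma le_addr (x y z : V) : le x y -> le (z + x) (z + y).
Proof. by move=> h; rewrite ![z + _]addrC; apply: vl_le_add. Qed.

Lemma le_add2r (x y z : V) : le (x + z) (y + z) -> le x y.
Proof. by move=> /(vl_le_add (- z)); rewrite !addrK. Qed.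

Lemma le_D (x y z w : V) : le x y -> le z w -> le (x + z) (y + w).
Proof. move=> h1 h2; apply: vl_le_trans (vl_le_add z h1) _; exact: le_addr. Qed.

Lemma le_subr0 (x y : V) : le x y -> le 0 (y - x).
Proof. by move=> /(vl_le_add (- x)); rewrite subrr. Qed.

Lemma le_0subr (x y : V) : le 0 (y - x) -> le x y.
Proof. by move=> /(vl_le_add x); rewrite add0r subrK. Qed.

Lemma le_opp (x y : V) : le x y -> le (- y) (- x).
Proof.
move=> /(vl_le_add (- x - y)).
by rewrite addrA subrr add0r addrCA subrr addr0.
Qed.

Lemma le_opp2 (x y : V) : le (- y) (- x) -> le x y.
Proof. by move/le_opp; rewrite !opprK. Qed.

Lemma vjoinC (x y : V) : join x y = join y x.
Proof.
by apply: vl_le_anti; apply: vl_join_least; [exact: vl_join_ubr|exact: vl_join_ubl|exact: vl_join_ubr|exact: vl_join_ubl].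
Qed.

Lemma vjoin_idem (x : V) : join x x = x.
Proof.
apply: vl_le_anti; last exact: vl_join_ubl.
by apply: vl_join_least; apply: vl_le_refl.
Qed.

Lemma vjoin_r (x y : V) : le x y -> join x y = y.
Proof.
move=> h; apply: vl_le_anti; last exact: vl_join_ubr.
by apply: vl_join_least => //; apply: vl_le_refl.
Qed.

Lemma vjoin_mono (a b a' b' : V) : le a a' -> le b b' -> le (join a b) (join a' b').
Proof.
move=> h1 h2; apply: vl_join_least.
  exact: vl_le_trans h1 (vl_join_ubl _ _).
exact: vl_le_trans h2 (vl_join_ubr _ _).
Qed.

Lemma abs_ubl (x : V) : le x (abs x). Proof. exact: vl_join_ubl. Qed.
Lemma abs_ubr (x : V) : le (- x) (abs x). Proof. exact: vl_join_ubr. Qed.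

Lemma le_half (x : V) : le 0 (x + x) -> le 0 x.
Proof.
move=> h.
have h2 : (0:R) <= 2^-1 by rewrite invr_ge0 ler0n.
have := vl_le_scale h2 h.
have -> : x + x = 2 *: x by rewrite scaler_nat mulr2n.
by rewrite scaler0 scalerA mulVf ?scale1r ?pnatr_eq0.
Qed.

Lemma abs_ge0 (x : V) : le 0 (abs x).
Proof.
apply: le_half; have := le_D (abs_ubl x) (abs_ubr x).
by rewrite subrr.
Qed.

Lemma abs_le (w c : V) : le w c -> le (- c) w -> le (abs w) c.
Proof. by move=> h1 h2; apply: vl_join_least => //; apply: le_opp2; rewrite opprK. Qed.

Lemma abs_id (x : V) : le 0 x -> abs x = x.
Proof.
move=> h; rewrite /vl_abs vjoinC; apply: vjoin_r.
apply: vl_le_trans (le_opp h) _; rewrite oppr0 //.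
Qed.

Lemma abs_abs (x : V) : abs (abs x) = abs x.
Proof. exact/abs_id/abs_ge0. Qed.

Lemma absN (x : V) : abs (- x) = abs x.
Proof. by rewrite /vl_abs opprK vjoinC. Qed.

Lemma norm_abs (x : V) : `|abs x| = `|x|.
Proof.
apply/eqP; rewrite eq_le; apply/andP; split; apply: vl_lattice_norm;
have := abs_abs x; rewrite /vl_abs => ->; exact: vl_le_refl.
Qed.

Lemma abs_tri (x y : V) : le (abs (x + y)) (abs x + abs y).
Proof.
apply: abs_le; first exact: le_D (abs_ubl _) (abs_ubl _).
apply: le_opp2; rewrite opprK opprD.
apply: le_D; exact: abs_ubr.
Qed.

Lemma abs0 : abs 0 = 0.
Proof. by rewrite /vl_abs oppr0 vjoin_idem. Qed.

Lemma abs_eq0 (x : V) : abs x = 0 -> x = 0.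
Proof. by move=> h; apply/normr0_eq0; rewrite -norm_abs h normr0. Qed.

Lemma join_shift (a b c d : V) : le 0 c -> le 0 d ->
  le (join (a + c) (b + d)) (join a b + (c + d)).
Proof.
move=> hc hd; apply: vl_join_least.
  rewrite addrA -[a + c]addr0; apply: le_D hd.
  exact: le_D (vl_join_ubl _ _) (vl_le_refl _).
rewrite [c + d]addrC addrA -[b + d]addr0; apply: le_D hc.
exact: le_D (vl_join_ubr _ _) (vl_le_refl _).
Qed.

Lemma le_add_abs (a a' : V) : le a (a' + abs (a - a')).
Proof.
have := vl_le_add a' (abs_ubl (a - a')); rewrite subrK addrC //.
Qed.

Lemma le_sub_from (y y' s : V) : le y' (y + s) -> le (- s) (y - y').
Proof.
move=> h; apply: (@le_add2r _ _ (s + y')).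
by rewrite addKr [s + y']addrC addrA subrK.
Qed.

Lemma join_lip (a b a' b' : V) :
  le (abs (join a b - join a' b')) (abs (a - a') + abs (b - b')).
Proof.
have h0 := abs_ge0 (a - a'); have h1 := abs_ge0 (b - b').
apply: abs_le.
  apply: le_0subr; rewrite opprB addrA; apply: le_subr0.
  apply: vl_le_trans (vjoin_mono (le_add_abs a a') (le_add_abs b b')) _.
  rewrite addrC; exact: join_shift.
apply: le_sub_from.
rewrite -(absN (a - a')) -(absN (b - b')) !opprB.
apply: vl_le_trans (vjoin_mono (le_add_abs a' a) (le_add_abs b' b)) _.
exact: join_shift (abs_ge0 _) (abs_ge0 _).
Qed.

Lemma norm_le (x y : V) : le (abs x) (abs y) -> `|x| <= `|y|.
Proof. exact: vl_lattice_norm. Qed.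

Lemma norm_le0 (x w : V) : le (abs x) w -> `|x| <= `|w|.
Proof.
move=> h; apply: norm_le; apply: vl_le_trans h _; exact: abs_ubl.
Qed.

Lemma norm_join_lip (a b a' b' : V) :
  `|join a b - join a' b'| <= `|a - a'| + `|b - b'|.
Proof.
apply: le_trans (norm_le0 (join_lip a b a' b')) _.
by rewrite -(norm_abs (a - a')) -(norm_abs (b - b')) ler_normD.
Qed.

Lemma riesz_aux (y w : V) : le 0 w ->
  le (y - join (y - w) 0 + join (- y - w) 0) w.
Proof.
move=> hw; set u := join (y - w) 0; set v := join (- y - w) 0.
have hu : le 0 u by exact: vl_join_ubr.
have hw0 : le (- w) 0 by have := le_opp hw; rewrite oppr0.
have hww := vl_le_trans hw0 hw.
have hv : le v (w - y + u).
  apply: vl_join_least.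
    apply: vl_le_trans (le_addr (- y) hww) _; rewrite addrC.
    by have := le_addr (w - y) hu; rewrite addr0.
  have := le_subr0 (vl_join_ubl (y - w) 0); rewrite opprB addrC.
  by [].
apply: vl_le_trans (le_addr (y - u) hv) _.
rewrite addrC -addrA (addrC u) subrK subrK; exact: vl_le_refl.
Qed.

End VL.



Lemma close_closure (R : realType) (V : normedModType R) (I : set V) (y : V) :
  (forall e : R, 0 < e -> exists k, I k /\ `|y - k| < e) -> closure I y.
Proof.
move=> h B /nbhs_ballP [e e0 hB].
have [k [Ik hk]] := h e e0.
exists k; split => //; apply: hB.
by rewrite -ball_normE /ball_ /=.
Qed.

Section Quot.
Variables (R : realType) (V : vlattice R) (I : set V) (hI : is_closed_ideal I).
Local Notation le := (vl_le V).
Local Notation join := (vl_join V).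
Local Notation abs := (@vl_abs R V).

Lemma I0 : I 0. Proof. by case: hI => [[]]. Qed.
Lemma I_lin a x y : I x -> I y -> I (a *: x + y). Proof. by case: hI => [[_ h _] _]; apply: h. Qed.
Lemma I_solid x y : I y -> le (abs x) (abs y) -> I x. Proof. by case: hI => [[_ _ h] _]; apply: h. Qed.
Lemma I_closed : closed I. Proof. by case: hI. Qed.
Lemma I_add x y : I x -> I y -> I (x + y).
Proof. by move=> hx hy; have := I_lin 1 hx hy; rewrite scale1r. Qed.
Lemma I_scale a x : I x -> I (a *: x).
Proof. by move=> hx; have := I_lin a hx I0; rewrite addr0. Qed.
Lemma I_opp x : I x -> I (- x).
Proof. by move=> hx; have := I_scale (-1) hx; rewrite scaleN1r. Qed.
Lemma I_sub x y : I x -> I y -> I (x - y).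
Proof. by move=> hx hy; apply: I_add hx (I_opp hy). Qed.
Lemma I_abs x : I x -> I (abs x).
Proof. by move=> hx; apply: I_solid hx _; rewrite abs_abs; apply: vl_le_refl. Qed.
Lemma I_le x y : I y -> le 0 x -> le x (abs y) -> I x.
Proof. by move=> hy hx h; apply: I_solid hy _; rewrite abs_id. Qed.

Definition eqv (x y : V) := I (x - y).
Lemma eqv_refl x : eqv x x. Proof. by rewrite /eqv subrr; exact: I0. Qed.
Lemma eqv_sym x y : eqv x y -> eqv y x.
Proof. by rewrite /eqv => /I_opp; rewrite opprB. Qed.
Lemma eqv_trans x y z : eqv x y -> eqv y z -> eqv x z.
Proof. by rewrite /eqv => h1 h2; have := I_add h1 h2; rewrite addrA subrK. Qed.
Lemma eqv_add x y x' y' : eqv x x' -> eqv y y' -> eqv (x + y) (x' + y').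
Proof. by rewrite /eqv => h1 h2; rewrite opprD addrACA; exact: I_add. Qed.
Lemma eqv_opp x x' : eqv x x' -> eqv (- x) (- x').
Proof. by rewrite /eqv => h; rewrite -opprD; exact: I_opp. Qed.
Lemma eqv_scale a x x' : eqv x x' -> eqv (a *: x) (a *: x').
Proof. by rewrite /eqv => h; rewrite -scalerBr; exact: I_scale. Qed.
Lemma eqv_eq x y : x = y -> eqv x y. Proof. by move=> ->; exact: eqv_refl. Qed.

Lemma ex_canon (y : V) : exists z : V, `[< eqv z y >].
Proof. by exists y; apply/asboolP; exact: eqv_refl. Qed.

Definition canon (y : V) : V := xchoose (ex_canon y).

Lemma canon_eqv y : eqv (canon y) y.
Proof. exact/asboolP/(xchooseP (ex_canon y)). Qed.

Lemma canon_eq y y' : eqv y y' -> canon y = canon y'.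
Proof.
move=> h; apply: eq_xchoose => z; apply/asboolP/asboolP => h'.
  exact: eqv_trans h' h.
exact: eqv_trans h' (eqv_sym h).
Qed.

Lemma canon_idem y : canon (canon y) = canon y.
Proof. exact/canon_eq/canon_eqv. Qed.

Definition Q := {y : V | canon y == y}.

HB.instance Definition _ := [Choice of Q by <:].

Definition mkQ (y : V) : Q := exist _ (canon y) (introT eqP (canon_idem y)).

Lemma mkQ_eq y y' : eqv y y' -> mkQ y = mkQ y'.
Proof. by move=> h; apply: val_inj => /=; exact: canon_eq. Qed.

Lemma mkQ_val (a : Q) : mkQ (val a) = a.
Proof. by apply: val_inj => /=; case: a => y /= /eqP. Qed.

Lemma val_mkQ y : eqv (val (mkQ y)) y. Proof. exact: canon_eqv. Qed.

Lemma mkQ_eqv y y' : mkQ y = mkQ y' -> eqv y y'.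
Proof.
move=> h; apply: eqv_trans (eqv_sym (val_mkQ y)) _.
by rewrite h; exact: val_mkQ.
Qed.

Definition qzero : Q := mkQ 0.
Definition qadd (a b : Q) : Q := mkQ (val a + val b).
Definition qopp (a : Q) : Q := mkQ (- val a).
Definition qscale (c : R) (a : Q) : Q := mkQ (c *: val a).

Lemma qaddA : associative qadd.
Proof.
move=> a b c; apply: mkQ_eq.
apply: eqv_trans (eqv_add (eqv_refl _) (val_mkQ _)) _.
apply: eqv_trans _ (eqv_add (eqv_sym (val_mkQ _)) (eqv_refl _)).
by apply: eqv_eq; rewrite addrA.
Qed.

Lemma qaddC : commutative qadd.
Proof. by move=> a b; rewrite /qadd addrC. Qed.

Lemma qadd0 : left_id qzero qadd.
Proof.
move=> a; rewrite -[RHS]mkQ_val; apply: mkQ_eq.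
apply: eqv_trans (eqv_add (val_mkQ _) (eqv_refl _)) _.
by rewrite add0r; exact: eqv_refl.
Qed.

Lemma qaddN : left_inverse qzero qopp qadd.
Proof.
move=> a; apply: mkQ_eq.
apply: eqv_trans (eqv_add (val_mkQ _) (eqv_refl _)) _.
by rewrite addNr; exact: eqv_refl.
Qed.

HB.instance Definition _ := GRing.isZmodule.Build Q qaddA qaddC qadd0 qaddN.

Lemma qscaleA a b (v : Q) : qscale a (qscale b v) = qscale (a * b) v.
Proof.
apply: mkQ_eq; apply: eqv_trans (eqv_scale _ (val_mkQ _)) _.
by rewrite scalerA; exact: eqv_refl.
Qed.

Lemma qscale1 : left_id 1 qscale.
Proof. by move=> v; rewrite /qscale scale1r mkQ_val. Qed.

Lemma qscaleDr : right_distributive qscale +%R.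
Proof.
move=> c u v; apply: mkQ_eq.
apply: eqv_trans (eqv_scale _ (val_mkQ _)) _.
apply: eqv_trans _ (eqv_add (eqv_sym (val_mkQ _)) (eqv_sym (val_mkQ _))).
by rewrite scalerDr; exact: eqv_refl.
Qed.

Lemma qscaleDl (v : Q) : {morph qscale^~ v : a b / a + b}.
Proof.
move=> a b; apply: mkQ_eq.
apply: eqv_trans _ (eqv_add (eqv_sym (val_mkQ _)) (eqv_sym (val_mkQ _))).
by rewrite scalerDl; exact: eqv_refl.
Qed.

HB.instance Definition _ := GRing.Zmodule_isLmodule.Build R Q qscaleA qscale1 qscaleDr qscaleDl.


Definition NS (y : V) := [set `|y - k| | k in I].
Definition qn (y : V) : R := inf (NS y).

Lemma NS_ne y : NS y !=set0.
Proof. by exists `|y - 0|; exists 0 => //; exact: I0. Qed.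

Lemma NS_lb y : has_lbound (NS y).
Proof. by exists 0 => _ [k _ <-]. Qed.

Lemma qn_le y k : I k -> qn y <= `|y - k|.
Proof. by move=> hk; apply: ge_inf; [exact: NS_lb | exists k]. Qed.

Lemma qn_lb y c : (forall k, I k -> c <= `|y - k|) -> c <= qn y.
Proof. by move=> h; apply: lb_le_inf; [exact: NS_ne | move=> _ [k hk <-]; exact: h]. Qed.

Lemma qn_ge0 y : 0 <= qn y.
Proof. by apply: qn_lb. Qed.

Lemma qn_approx y e : 0 < e -> exists k, I k /\ `|y - k| < qn y + e.
Proof.
move=> e0; have [_ [k hk <-] h] := inf_adherent e0 (conj (NS_ne y) (NS_lb y)).
by exists k.
Qed.

Lemma qn_eqv y y' : eqv y y' -> qn y = qn y'.
Proof.
have H : forall y y', eqv y y' -> qn y <= qn y'.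
  move=> {}y {}y' h; apply: qn_lb => k hk.
  have -> : y' - k = y - ((y - y') + k) by rewrite opprD addrA subKr.
  by apply: qn_le; apply: I_add.
by move=> h; apply/eqP; rewrite eq_le !H //; exact: eqv_sym.
Qed.

Lemma qn_le_norm y : qn y <= `|y|.
Proof. by have := qn_le y I0; rewrite subr0. Qed.

Lemma qn_zero y : qn y = 0 -> I y.
Proof.
move=> h; apply: I_closed; apply: close_closure => e e0.
have [k [hk hk2]] := qn_approx y e0; exists k; split => //.
by rewrite h add0r in hk2.
Qed.

Definition qnorm (a : Q) : R := qn (val a).

Lemma qnorm_mkQ y : qnorm (mkQ y) = qn y.
Proof. exact/qn_eqv/val_mkQ. Qed.

Lemma qnormD (a b : Q) : qnorm (a + b) <= qnorm a + qnorm b.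
Proof.
rewrite /qnorm; have -> : val (a + b) = val (mkQ (val a + val b)) by [].
rewrite -/(qnorm _) qnorm_mkQ.
apply/ler_addgt0Pr => e e0.
have e20 : 0 < e / 2 by rewrite divr_gt0.
have [k1 [h1 h1']] := qn_approx (val a) e20.
have [k2 [h2 h2']] := qn_approx (val b) e20.
apply: le_trans (qn_le _ (I_add h1 h2)) _.
rewrite opprD addrACA; apply: le_trans (ler_normD _ _) _.
apply: le_trans (ltW (ltrD h1' h2')) _.
by rewrite addrACA -splitr.
Qed.

Lemma qnormZ (c : R) (a : Q) : qnorm (c *: a) = `|c| * qnorm a.
Proof.
rewrite /qnorm; have -> : val (c *: a) = val (mkQ (c *: val a)) by [].
rewrite -/(qnorm _) qnorm_mkQ; set y := val a.
have [->|c0] := eqVneq c 0.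
  rewrite scale0r normr0 mul0r; apply/eqP; rewrite eq_le qn_ge0 andbT.
  by have := qn_le_norm 0; rewrite normr0.
have nc0 : 0 < `|c| by rewrite normr_gt0.
apply/eqP; rewrite eq_le; apply/andP; split.
  rewrite mulrC -ler_pdivrMr //; apply: qn_lb => k hk.
  rewrite ler_pdivrMr // mulrC -normrZ scalerBr.
  by apply: qn_le; apply: I_scale.
apply: qn_lb => k hk.
idtac.
have -> : c *: y - k = c *: (y - c^-1 *: k) by rewrite scalerBr scalerA mulfV // scale1r.
by rewrite normrZ ler_wpM2l ?normr_ge0 // qn_le //; apply: I_scale.
Qed.

Lemma qnorm0 (a : Q) : qnorm a = 0 -> a = 0.
Proof.
move=> /qn_zero h; rewrite -[a]mkQ_val; apply: mkQ_eq.
by rewrite /eqv subr0.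
Qed.

HB.instance Definition _ := Lmodule_isNormed.Build R Q qnormD qnormZ qnorm0.

Definition leI (x y : V) := exists i, I i /\ le x (y + i).

Lemma leI_refl x : leI x x. Proof. by exists 0; split; [exact: I0 | rewrite addr0; exact: vl_le_refl]. Qed.

Lemma leI_trans x y z : leI x y -> leI y z -> leI x z.
Proof.
move=> [i [hi h1]] [i' [hi' h2]]; exists (i' + i); split; first exact: I_add.
apply: vl_le_trans h1 _; rewrite addrA; exact: vl_le_add.
Qed.

Lemma leI_le x y : le x y -> leI x y.
Proof. by move=> h; exists 0; split; [exact: I0|rewrite addr0]. Qed.

Lemma leI_eqv x y : eqv x y -> leI x y.
Proof.
move=> h; exists (x - y); split => //; rewrite addrC subrK; exact: vl_le_refl.
Qed.

Lemma leI_shift x y x' y' : eqv x' x -> eqv y y' -> leI x y -> leI x' y'.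
Proof.
move=> h1 h2 h; apply: leI_trans (leI_eqv h1) _; apply: leI_trans h _.
exact: leI_eqv.
Qed.

Lemma leI_add x y z : leI x y -> leI (x + z) (y + z).
Proof.
move=> [i [hi h]]; exists i; split => //.
rewrite addrAC; exact: vl_le_add.
Qed.

Lemma leI_scale (c : R) x y : 0 <= c -> leI x y -> leI (c *: x) (c *: y).
Proof.
move=> c0 [i [hi h]]; exists (c *: i); split; first exact: I_scale.
rewrite -scalerDr; exact: vl_le_scale.
Qed.

Lemma leI_anti x y : leI x y -> leI y x -> eqv x y.
Proof.
move=> [i [hi h1]] [i' [hi' h2]].
have hc : le 0 (abs i + abs i') by have := le_D (abs_ge0 i) (abs_ge0 i'); rewrite addr0.
apply: (@I_solid (x - y) (abs i + abs i')).
  exact: I_add (I_abs hi) (I_abs hi').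
rewrite (abs_id hc); apply: abs_le.
  apply: vl_le_trans (vl_le_add (- y) h1) _; rewrite addrAC subrr add0r.
  by have := le_D (abs_ubl i) (abs_ge0 i'); rewrite addr0.
apply: le_sub_from; apply: vl_le_trans h2 _; apply: le_addr.
by have := le_D (abs_ge0 i) (abs_ubl i'); rewrite add0r.
Qed.

Lemma leI_join x y z : leI x z -> leI y z -> leI (join x y) z.
Proof.
move=> [i [hi h1]] [i' [hi' h2]]; exists (abs i + abs i'); split.
  exact: I_add (I_abs hi) (I_abs hi').
apply: vl_join_least.
  apply: vl_le_trans h1 _; apply: le_addr.
  by have := le_D (abs_ubl i) (abs_ge0 i'); rewrite addr0.
apply: vl_le_trans h2 _; apply: le_addr.
by have := le_D (abs_ge0 i) (abs_ubl i'); rewrite add0r.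
Qed.

Lemma eqv_join x y x' y' : eqv x x' -> eqv y y' -> eqv (join x y) (join x' y').
Proof.
move=> h1 h2; apply: I_solid (I_add (I_abs h1) (I_abs h2)) _.
have hc : le 0 (abs (x - x') + abs (y - y')).
  by have := le_D (abs_ge0 (x - x')) (abs_ge0 (y - y')); rewrite addr0.
rewrite (abs_id hc); exact: join_lip.
Qed.

Lemma riesz x w p : le 0 w -> I p -> le 0 p -> le (abs x) (w + p) ->
  exists k, I k /\ le (abs (x - k)) w.
Proof.
move=> hw hp hp0 h.
set u := join (x - w) 0; set v := join (- x - w) 0.
have hu : I u.
  apply: (I_le hp); first exact: vl_join_ubr.
  rewrite (abs_id hp0); apply: vl_join_least => //.
  apply: (le_add2r (z := w)); rewrite subrK addrC.
  exact: vl_le_trans (abs_ubl x) h.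
have hv : I v.
  apply: (I_le hp); first exact: vl_join_ubr.
  rewrite (abs_id hp0); apply: vl_join_least => //.
  apply: (le_add2r (z := w)); rewrite subrK addrC.
  exact: vl_le_trans (abs_ubr x) h.
exists (u - v); split; first exact: I_sub.
apply: abs_le.
  by rewrite opprB addrA addrAC; exact: riesz_aux.
apply: le_opp2; rewrite opprK.
have -> : - (x - (u - v)) = - x - v + u by rewrite opprB addrC addrA addrAC.
by have := riesz_aux (- x) hw; rewrite opprK.
Qed.

Definition leQ (a b : Q) := leI (val a) (val b).
Definition joinQ (a b : Q) : Q := mkQ (join (val a) (val b)).

Lemma leQ_refl a : leQ a a. Proof. exact: leI_refl. Qed.
Lemma leQ_anti a b : leQ a b -> leQ b a -> a = b.
Proof. by move=> h1 h2; rewrite -[a]mkQ_val -[b]mkQ_val; apply: mkQ_eq; exact: leI_anti. Qed.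
Lemma leQ_trans a b c : leQ a b -> leQ b c -> leQ a c. Proof. exact: leI_trans. Qed.
Lemma leQ_add a b c : leQ a b -> leQ (a + c) (b + c).
Proof.
move=> h; apply: leI_shift (val_mkQ _) (eqv_sym (val_mkQ _)) _.
exact: leI_add.
Qed.
Lemma leQ_scale (c : R) a b : 0 <= c -> leQ a b -> leQ (c *: a) (c *: b).
Proof.
move=> c0 h; apply: leI_shift (val_mkQ _) (eqv_sym (val_mkQ _)) _.
exact: leI_scale.
Qed.
Lemma joinQ_ubl a b : leQ a (joinQ a b).
Proof.
apply: leI_shift (eqv_refl _) (eqv_sym (val_mkQ _)) _.
exact/leI_le/vl_join_ubl.
Qed.
Lemma joinQ_ubr a b : leQ b (joinQ a b).
Proof.
apply: leI_shift (eqv_refl _) (eqv_sym (val_mkQ _)) _.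
exact/leI_le/vl_join_ubr.
Qed.
Lemma joinQ_least a b c : leQ a c -> leQ b c -> leQ (joinQ a b) c.
Proof.
move=> h1 h2; apply: leI_shift (val_mkQ _) (eqv_refl _) _.
exact: leI_join.
Qed.

Lemma absQ_eqv (a : Q) : eqv (val (joinQ a (- a))) (abs (val a)).
Proof.
apply: eqv_trans (val_mkQ _) _.
exact: eqv_join (eqv_refl _) (val_mkQ _).
Qed.

Lemma leQ_norm (a b : Q) : leQ (joinQ a (- a)) (joinQ b (- b)) -> `|a| <= `|b|.
Proof.
move=> h.
have h' : leI (abs (val a)) (abs (val b)).
  exact: leI_shift (eqv_sym (absQ_eqv a)) (absQ_eqv b) h.
case: h' => i [hi hab].
change (qnorm a <= qnorm b); rewrite /qnorm; apply: qn_lb => k hk.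
have hw := abs_ge0 (val b - k).
have hp0 : le 0 (abs k + abs i).
  by have := le_D (abs_ge0 k) (abs_ge0 i); rewrite addr0.
have hle : le (abs (val a)) (abs (val b - k) + (abs k + abs i)).
  apply: vl_le_trans hab _; rewrite addrA; apply: le_D; last exact: abs_ubl.
  by have := abs_tri (val b - k) k; rewrite subrK.
have [k' [hk' hk'2]] := riesz hw (I_add (I_abs hk) (I_abs hi)) hp0 hle.
apply: le_trans (qn_le _ hk') _.
by rewrite -(norm_abs (val b - k)); exact: norm_le0.
Qed.

Definition QL : vlattice R := @VLattice R Q leQ joinQ leQ_refl leQ_anti leQ_trans
  leQ_add leQ_scale joinQ_ubl joinQ_ubr joinQ_least leQ_norm.

End Quot.



Section Eps.
Variable R : realType.
Definition eps (k : nat) : R := ((2 : R) ^+ k)^-1.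
Lemma eps_gt0 k : 0 < eps k.
Proof. by rewrite /eps invr_gt0 exprn_gt0. Qed.
Lemma epsS k : eps k.+1 = eps k / 2.
Proof. by rewrite /eps exprS invfM mulrC. Qed.
Lemma eps_le i j : (i <= j)%N -> eps j <= eps i.
Proof.
move/subnK <-; elim: (j - i)%N => [|d ih]; first by rewrite add0n.
apply: le_trans ih; rewrite addSn epsS ler_pdivrMr // ler_peMr ?ler1n //.
exact: ltW (eps_gt0 _).
Qed.
Lemma eps_small (e : R) : 0 < e -> exists n, eps n < e.
Proof.
move=> e0; have h0 : 0 <= e^-1 by rewrite invr_ge0 ltW.
have := archi_boundP h0.
set n := Num.Def.archi_bound _ => hn; exists n.
rewrite /eps -(invrK e) ltf_pV2 ?posrE ?exprn_gt0 ?invr_gt0 //.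
apply: lt_trans hn _; rewrite -natrX ltr_nat; exact: ltn_expl.
Qed.
End Eps.

Section Complete.
Variables (R : realType) (V : vlattice R) (I : set V) (hI : is_closed_ideal I).
Local Notation qn := (qn I).

Lemma qn_tri (x y : V) : qn (x + y) <= qn x + qn y.
Proof.
apply/ler_addgt0Pr => e e0.
have e20 : 0 < e / 2 by rewrite divr_gt0.
have [k1 [h1 h1']] := qn_approx hI x e20.
have [k2 [h2 h2']] := qn_approx hI y e20.
apply: le_trans (qn_le _ (I_add hI h1 h2)) _.
rewrite opprD addrACA; apply: le_trans (ler_normD _ _) _.
apply: le_trans (ltW (ltrD h1' h2')) _.
by rewrite addrACA -splitr.
Qed.

Lemma normQ_sub (a b : QL hI) : `|a - b| = qn (val a - val b).
Proof.
change (qnorm (mkQ hI (val a + val (mkQ hI (- val b)))) = qn (val a - val b)).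
rewrite qnorm_mkQ; apply: (qn_eqv hI).
exact: eqv_add (eqv_refl _ _) (val_mkQ _ _).
Qed.

Theorem QL_banach : is_banach V -> is_banach (QL hI).
Proof.
move=> hV u hu.
have hN : forall k, exists N : nat, forall m n, (N <= m)%N -> (N <= n)%N ->
    qn (val (u m) - val (u n)) < eps R k.
  move=> k; have [N hN] := hu _ (eps_gt0 R k); exists N => m n hm hn.
  by rewrite -normQ_sub; apply: hN.
case: (choice hN) => N hN'.
pose M := fix M k := if k is k'.+1 then maxn (M k') (N k) else N 0.
have hMN : forall k, (N k <= M k)%N by case=> [|k] //=; rewrite leq_maxr.
have hMS : forall k, (M k <= M k.+1)%N by move=> k /=; rewrite leq_maxl.
pose w k := val (u (M k)).
have hw : forall k, qn (w k.+1 - w k) < eps R k.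
  by move=> k; apply: hN'; [exact: leq_trans (hMN k) (hMS k) | exact: hMN].
have hd : forall p : V * R, exists d, I d /\ (qn p.1 < p.2 -> `|p.1 - d| < p.2).
  move=> [y e] /=; case: (boolP (qn y < e)) => he.
    have he' : 0 < e - qn y by rewrite subr_gt0.
    have [d [hd1 hd2]] := qn_approx hI y he'.
    by exists d; split => // _; move: hd2; rewrite [qn y + _]addrC subrK.
  by exists 0; split => //; exact: I0.
case: (choice hd) => D hD.
pose z := fix z k := if k is k'.+1 then w k - D (w k - z k', eps R k') else w 0.
have hzw : forall k, eqv I (z k) (w k).
  elim=> [|k ih] /=; first exact: eqv_refl.
  by rewrite /eqv addrAC subrr add0r; apply: I_opp; case: (hD (w k.+1 - z k, eps R k)).
have hz1 : forall k, `|z k.+1 - z k| < eps R k.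
  move=> k; rewrite /= addrAC.
  case: (hD (w k.+1 - z k, eps R k)) => _ /=; apply.
  rewrite (qn_eqv hI (y' := w k.+1 - w k)) //.
  exact: eqv_add (eqv_refl _ _) (eqv_opp hI (hzw k)).
have hzt : forall n j, `|z (n + j)%N - z n| <= 2 * eps R n - 2 * eps R (n + j)%N.
  move=> n; elim=> [|j ih]; first by rewrite addn0 !subrr normr0.
  rewrite addnS.
  have -> : z (n + j).+1 - z n = (z (n + j).+1 - z (n + j)%N) + (z (n + j)%N - z n).
    by rewrite addrA subrK.
  apply: le_trans (ler_normD _ _) _.
  apply: le_trans (lerD (ltW (hz1 _)) ih) _.
  rewrite epsS; lra.
have hzb : forall n m, (n <= m)%N -> `|z m - z n| <= 2 * eps R n.
  move=> n m /subnKC <-; apply: le_trans (hzt _ _) _.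
  by rewrite lerBlDr lerDl mulr_ge0 // ltW // eps_gt0.
have hzc : forall e : R, 0 < e -> exists N0 : nat, forall m n : nat,
    (N0 <= m)%N -> (N0 <= n)%N -> `|z m - z n| < e.
  move=> e e0; have e4 : 0 < e / 4 by rewrite divr_gt0.
  have [n0 hn0] := eps_small e4; exists n0 => m n hm hn.
  have -> : z m - z n = (z m - z n0) - (z n - z n0) by rewrite opprB addrA subrK.
  apply: le_lt_trans (ler_normB _ _) _.
  have := lerD (hzb _ _ hm) (hzb _ _ hn); move=> h; apply: le_lt_trans h _.
  lra.
have [l hl] := hV z hzc.
exists (mkQ hI l) => e e0.
have e2 : 0 < e / 2 by rewrite divr_gt0.
have [k1 hk1] := eps_small e2.
have [K0 hK0] := hl _ e2.
pose k := maxn k1 K0.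
exists (M k) => n hn.
rewrite normQ_sub (qn_eqv hI (y' := val (u n) - l)); last first.
  exact: eqv_add (eqv_refl _ _) (eqv_opp hI (val_mkQ _ _)).
have -> : val (u n) - l = (val (u n) - w k) + (w k - l) by rewrite addrA subrK.
apply: le_lt_trans (qn_tri _ _) _.
have h1 : qn (val (u n) - w k) < e / 2.
  apply: lt_le_trans (hN' k _ _ (leq_trans (hMN k) hn) (hMN k)) _.
  exact: le_trans (@eps_le R k1 k (leq_maxl _ _)) (ltW hk1).
have h2 : qn (w k - l) < e / 2.
  rewrite -(qn_eqv hI (y := z k - l)); last first.
    exact: eqv_add (hzw k) (eqv_refl _ _).
  apply: le_lt_trans (qn_le_norm hI _) _; apply: hK0; exact: leq_maxr.
by have := ltrD h1 h2; rewrite -splitr.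
Qed.
End Complete.



Section Lin.
Variables (R : realType) (X Y : vlattice R) (T : X -> Y) (hT : is_lin T).
Lemma lin0 : T 0 = 0.
Proof. have := congr1 (fun t => t - T 0) (hT 1 0 0); rewrite /= scaler0 scale1r addr0 subrr addrK. by move=> <-. Qed.
Lemma linD u v : T (u + v) = T u + T v.
Proof. by have := hT 1 u v; rewrite !scale1r. Qed.
Lemma linZ a u : T (a *: u) = a *: T u.
Proof. by have := hT a u 0; rewrite !addr0 lin0 addr0. Qed.
Lemma linN u : T (- u) = - T u.
Proof. by rewrite -scaleN1r linZ scaleN1r. Qed.
Lemma linB u v : T (u - v) = T u - T v.
Proof. by rewrite linD linN. Qed.
End Lin.

Lemma gen_closed_ideal_ok (R : realType) (V : vlattice R) (x : V) :
  is_closed_ideal (gen_closed_ideal x).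
Proof.
split; first split.
- by move=> J [[h0 _ _] _] _.
- by move=> a y y' hy hy' J hJ hx; case: (hJ) => [[_ hl _] _]; apply: hl; [apply: hy|apply: hy'].
- by move=> y y' hy' hle J hJ hx; case: (hJ) => [[_ _ hs] _]; apply: hs (hy' J hJ hx) hle.
- move=> y hy J hJ hx; case: (hJ) => [_ hc]; apply: hc.
  by apply: closureS hy => w hw; apply: hw.
Qed.

Lemma le0_by (R : realType) (r K : R) : 0 <= K ->
  (forall d, 0 < d -> r <= K * d) -> r <= 0.
Proof.
move=> K0 h; apply/ler_addgt0Pr => e e0; rewrite add0r.
have hK1 : 0 < K + 1 by rewrite ltr_wpDl.
apply: le_trans (h (e / (K + 1)) _) _; first by rewrite divr_gt0.
rewrite mulrA ler_pdivrMr // mulrC ler_wpM2l ?ltW //.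
lra.
Qed.

Lemma norm_eq0_by (R : realType) (V : normedModType R) (a b : V) (K : R) : 0 <= K ->
  (forall d, 0 < d -> `|a - b| <= K * d) -> a = b.
Proof.
move=> K0 h; apply/eqP; rewrite -subr_eq0 -normr_le0.
exact: le0_by K0 h.
Qed.

Section DirA.
Variables (R : realType) (X Xh : vlattice R) (j : X -> Xh) (hj : is_completion j).

Lemma dirA :
  (forall Y : vlattice R, is_banach Y ->
     forall T : X -> Y, is_lin T -> is_lattice_hom T -> is_bounded T ->
       injective T ->
       exists Th : Xh -> Y,
         [/\ is_lin Th, is_bounded Th, injective Th &
             forall x : X, Th (j x) = T x]) ->
  (forall x : Xh, vl_le Xh 0 x -> x <> 0 ->
     exists z : X, z <> 0 /\ gen_closed_ideal x (j z)).
Proof.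
case: hj => hban hlin hlat hiso hden.
move=> H x hx0 hxn; apply: contrapT => hno.
have hG := gen_closed_ideal_ok x.
set G := gen_closed_ideal x in hG hno.
pose T := fun z : X => mkQ hG (j z) : QL hG.
have hTl : is_lin T.
  move=> a y y'; rewrite /T hlin.
  apply: (mkQ_eq hG); apply: (eqv_sym hG).
  exact: (eqv_add hG (eqv_trans hG (val_mkQ hG _) (eqv_scale hG a (val_mkQ hG (j y)))) (val_mkQ hG (j y'))).
have hTh : is_lattice_hom T.
  move=> y1 y2; rewrite /T hlat; apply: (mkQ_eq hG).
  exact: (eqv_sym hG (eqv_join hG (val_mkQ hG (j y1)) (val_mkQ hG (j y2)))).
have hTb : is_bounded T.
  exists 1 => z; rewrite mul1r.
  change (qnorm (mkQ hG (j z)) <= `|z|); rewrite qnorm_mkQ -hiso.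
  exact: qn_le_norm.
have hTi : injective T.
  move=> z1 z2 /mkQ_eqv h.
  apply/eqP; rewrite -subr_eq0; apply/eqP.
  apply: contrapT => hne; apply: hno; exists (z1 - z2); split => //.
  by rewrite (linB hlin).
have [Th [hl hb hi he]] := H _ (@QL_banach _ _ _ hG hban) T hTl hTh hTb hTi.
have hThq : forall y, Th y = mkQ hG y.
  move=> y; case: hb => C hC.
  apply: (@norm_eq0_by _ _ _ _ (`|C| + 1 + 1)); first by rewrite !addr_ge0.
  move=> d d0; have [x0 hxd] := hden y d d0.
  have -> : Th y - mkQ hG y = Th (y - j x0) + (T x0 - mkQ hG y).
    by rewrite (linB hl) he addrA subrK.
  apply: le_trans (ler_normD _ _) _; rewrite mulrDl mul1r.
  apply: lerD.
    apply: le_trans (hC _) _; apply: le_trans (ler_wpM2r (normr_ge0 _) (ler_norm C)) _.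
    have := normr_ge0 C; nra.
  rewrite (@normQ_sub _ _ _ hG (T x0) (mkQ hG y)) /T.
  rewrite (qn_eqv hG (y' := j x0 - y)); last first.
    exact: (eqv_add hG (val_mkQ hG _) (eqv_opp hG (val_mkQ hG _))).
  apply: le_trans (qn_le_norm hG _) _.
  by rewrite distrC ltW.
have hx : G x by move=> J hJ hJx.
have : Th x = Th 0.
  rewrite !hThq; apply: (mkQ_eq hG); by rewrite /eqv subr0.
by move/hi.
Qed.
End DirA.



Lemma zid (G : zmodType) (A P Q P' Q' : G) :
  A - (P + Q) = (A - (P' + Q')) + ((P' - P) + (Q' - Q)).
Proof. by rewrite [(P' - P) + _]addrACA -opprD addrA subrK. Qed.

Lemma zid2 (G : zmodType) (P Q P' Q' : G) : (P + Q) - (P' + Q') = (P - P') + (Q - Q').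
Proof. by rewrite opprD addrACA. Qed.

Section DirB.
Variables (R : realType) (X Xh : vlattice R) (j : X -> Xh) (hj : is_completion j).
Hypothesis H2 : forall x : Xh, vl_le Xh 0 x -> x <> 0 ->
     exists z : X, z <> 0 /\ gen_closed_ideal x (j z).

Lemma dirB (Y : vlattice R) : is_banach Y ->
     forall T : X -> Y, is_lin T -> is_lattice_hom T -> is_bounded T ->
       injective T ->
       exists Th : Xh -> Y,
         [/\ is_lin Th, is_bounded Th, injective Th &
             forall x : X, Th (j x) = T x].
Proof.
move=> hY T hTl hTh [C hC] hTi.
case: hj => hban hlin hlat hiso hden.
pose C' := `|C| + 1.
have hC'0 : 0 < C' by rewrite /C' ltr_wpDl.
have hC' : forall x, `|T x| <= C' * `|x|.
  move=> x; apply: le_trans (hC x) _; rewrite ler_wpM2r ?normr_ge0 //.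
  by rewrite /C'; apply: le_trans (ler_norm C) _; rewrite lerDl.
have hTd : forall x1 x2, `|T x1 - T x2| <= C' * `|j x1 - j x2|.
  by move=> x1 x2; rewrite -(linB hTl) -(linB hlin) hiso.
have hs : forall p : Xh * nat, exists x, `|p.1 - j x| < eps R p.2.
  by move=> p; apply: hden; exact: eps_gt0.
case: (choice hs) => S hS.
have hlim : forall y, exists l : Y, forall e, 0 < e -> exists N : nat,
    forall n, (N <= n)%N -> `|T (S (y, n)) - l| < e.
  move=> y; apply: hY => e e0.
  have e' : 0 < e / (2 * C') by rewrite divr_gt0 // mulr_gt0.
  have [n0 hn0] := eps_small e'.
  exists n0 => m n hm hn.
  apply: le_lt_trans (hTd _ _) _.
  have -> : j (S (y, m)) - j (S (y, n)) = (y - j (S (y, n))) - (y - j (S (y, m))).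
    by rewrite opprB [RHS]addrC addrA subrK.
  have h1 : `|y - j (S (y, n))| < eps R n0.
    exact: lt_le_trans (hS (y, n)) (eps_le _ hn).
  have h2 : `|y - j (S (y, m))| < eps R n0.
    exact: lt_le_trans (hS (y, m)) (eps_le _ hm).
  have h3 := ler_normB (y - j (S (y, n))) (y - j (S (y, m))).
  have h4 : C' * (e / (2 * C')) = e / 2.
    by field; rewrite gt_eqF.
  have h5 := normr_ge0 (y - j (S (y, n)) - (y - j (S (y, m)))).
  nra.
case: (choice hlim) => Th hTh'.
have hL : forall y x, `|T x - Th y| <= C' * `|j x - y|.
  move=> y x; apply/ler_addgt0Pr => e e0.
  have e2 : 0 < e / 2 by rewrite divr_gt0.
  have [N hN] := hTh' y _ e2.
  have e' : 0 < e / (2 * C') by rewrite divr_gt0 // mulr_gt0.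
  have [n1 hn1] := eps_small e'.
  pose n := maxn N n1; pose s := S (y, n).
  have -> : T x - Th y = (T x - T s) + (T s - Th y) by rewrite addrA subrK.
  apply: le_trans (ler_normD _ _) _.
  have h1 : `|T s - Th y| < e / 2 by apply: hN; exact: leq_maxl.
  have h2 : `|y - j s| < e / (2 * C').
    apply: lt_le_trans (hS (y, n)) _.
    exact: le_trans (eps_le _ (leq_maxr N n1)) (ltW hn1).
  have h3 : `|j x - j s| <= `|j x - y| + `|y - j s|.
    by have := ler_normD (j x - y) (y - j s); rewrite addrA subrK.
  have h4 : C' * (e / (2 * C')) = e / 2.
    by field; rewrite gt_eqF.
  have h5 := hTd x s.
  have h6 := normr_ge0 (j x - y).
  nra.
have hext : forall x, Th (j x) = T x.
  move=> x; apply/eqP; rewrite eq_sym -subr_eq0 -normr_le0.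
  by have := hL (j x) x; rewrite subrr normr0 mulr0.
have hLd : forall y x d, `|y - j x| < d -> `|T x - Th y| <= C' * d.
  move=> y x d h; apply: le_trans (hL y x) _.
  by rewrite ler_pM2l // distrC ltW.
have hlinTh : is_lin Th.
  move=> a u v.
  apply: (@norm_eq0_by _ _ _ _ (2 * C' * (`|a| + 1))).
    by rewrite mulr_ge0 // ?mulr_ge0 ?ltW // addr_ge0.
  move=> d d0.
  have [x1 hx1] := hden u d d0; have [x2 hx2] := hden v d d0.
  rewrite (zid _ _ _ (a *: T x1) (T x2)).
  apply: le_trans (ler_normD _ _) _.
  have hA : `|Th (a *: u + v) - (a *: T x1 + T x2)| <= C' * (`|a| * d + d).
    rewrite -hTl distrC; apply: hLd.
    rewrite hlin zid2 -scalerBr; apply: le_lt_trans (ler_normD _ _) _.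
    rewrite normrZ.
    have := ler_wpM2l (normr_ge0 a) (ltW hx1).
    have := normr_ge0 (v - j x2). have := normr_ge0 a.
    nra.
  have hB1 : `|T x1 - Th u| <= C' * d by exact: hLd.
  have hB2 : `|T x2 - Th v| <= C' * d by exact: hLd.
  have hB : `|a *: T x1 - a *: Th u + (T x2 - Th v)| <= `|a| * (C' * d) + C' * d.
    rewrite -scalerBr; apply: le_trans (ler_normD _ _) _.
    by rewrite normrZ; apply: lerD => //; apply: ler_wpM2l.
  have := normr_ge0 a.
  nra.
have hbTh' : forall y, `|Th y| <= C' * `|y|.
  move=> y.
  rewrite -subr_le0; apply: (@le0_by _ _ (2 * C')); first by rewrite mulr_ge0 ?ltW.
  move=> d d0; have [x hx] := hden y d d0.
  have h1 := hLd y x d hx.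
  have h2 := hC' x.
  have h3 : `|x| <= `|y| + d.
    rewrite -hiso; have := ler_normD y (j x - y); rewrite addrC subrK => h.
    by apply: le_trans h _; rewrite lerD2l distrC ltW.
  have h4 : `|Th y| <= `|T x - Th y| + `|T x|.
    by have := ler_normD (Th y - T x) (T x); rewrite subrK distrC.
  nra.
have hbTh : is_bounded Th by exists C'.
have hlatTh : is_lattice_hom Th.
  move=> u v.
  apply: (@norm_eq0_by _ _ _ _ (4 * C')); first by rewrite mulr_ge0 ?ltW.
  move=> d d0.
  have [x1 hx1] := hden u d d0; have [x2 hx2] := hden v d d0.
  have -> : Th (vl_join Xh u v) - vl_join Y (Th u) (Th v) =
     (Th (vl_join Xh u v) - T (vl_join X x1 x2)) + (T (vl_join X x1 x2) - vl_join Y (Th u) (Th v)).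
    by rewrite addrA subrK.
  apply: le_trans (ler_normD _ _) _.
  have hA : `|Th (vl_join Xh u v) - T (vl_join X x1 x2)| <= C' * (d + d).
    rewrite distrC; apply: le_trans (hL _ _) _; rewrite ler_pM2l // hlat.
    apply: le_trans (norm_join_lip _ _ _ _) _.
    by apply: lerD; rewrite distrC ltW.
  have hB : `|T (vl_join X x1 x2) - vl_join Y (Th u) (Th v)| <= C' * d + C' * d.
    rewrite hTh; apply: le_trans (norm_join_lip _ _ _ _) _.
    by apply: lerD; apply: hLd.
  nra.
have hmono : forall a b, vl_le Xh a b -> vl_le Y (Th a) (Th b).
  move=> a b hab; rewrite -(vjoin_r hab) hlatTh; exact: vl_join_ubl.
have habsTh : forall w, Th (vl_abs w) = vl_abs (Th w).
  by move=> w; rewrite /vl_abs hlatTh (linN hlinTh).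
have hK : is_closed_ideal [set w | Th w = 0].
  split; first split.
  - exact: lin0 hlinTh.
  - by move=> a w w' /= h1 h2; rewrite hlinTh h1 h2 scaler0 addr0.
  - move=> w w' /= h1 h2.
    have h3 := hmono _ _ h2; rewrite !habsTh h1 abs0 in h3.
    apply: abs_eq0; apply: vl_le_anti h3 _; exact: abs_ge0.
  - move=> w hw /=.
    apply: (@norm_eq0_by _ _ _ _ C'); first exact: ltW.
    move=> d d0.
    have [w' [hw' hb]] := hw _ (nbhsx_ballx w d d0).
    rewrite -ball_normE /ball_ /= in hb.
    rewrite -hw' -(linB hlinTh); apply: le_trans (hbTh' _) _.
    by rewrite ler_pM2l // ltW.
have hinj : injective Th.
  move=> u1 u2 h12; apply/eqP; rewrite -subr_eq0; apply/eqP.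
  apply: contrapT => hne.
  have hy : Th (u1 - u2) = 0 by rewrite (linB hlinTh) h12 subrr.
  set y := u1 - u2 in hne hy.
  have ha0 : vl_le Xh 0 (vl_abs y) := abs_ge0 y.
  have han : vl_abs y <> 0 by move/abs_eq0.
  have [z [hz hGz]] := H2 ha0 han.
  have hKa : Th (vl_abs y) = 0 by rewrite habsTh hy abs0.
  have := hGz _ hK hKa; rewrite /= hext => hTz.
  by apply: hz; apply: hTi; rewrite hTz (lin0 hTl).
by exists Th; split.
Qed.
End DirB.

End Aux.
Import Aux.

Theorem mainTheorem2 (R : realType) (X Xh : vlattice R) (j : X -> Xh)
  (hj : is_completion j) :
  (forall Y : vlattice R, is_banach Y ->
     forall T : X -> Y, is_lin T -> is_lattice_hom T -> is_bounded T ->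
       injective T ->
       exists Th : Xh -> Y,
         [/\ is_lin Th, is_bounded Th, injective Th &
             forall x : X, Th (j x) = T x])
  <->
  (forall x : Xh, vl_le Xh 0 x -> x <> 0 ->
     exists z : X, z <> 0 /\ gen_closed_ideal x (j z)).
Proof.
split; first exact: dirA.
by move=> H Y hY T hTl hTh hTb hTi; exact: (dirB hj H hY hTl hTh hTb hTi).
Qed.
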